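(* Let $T$ be a Galton–Watson tree with finite alphabet $\mathbb{A}$ and offspring distribution $W$, and let $\mathscr{A}$ be a nonempty collection of nonempty subsets of $\mathbb{A}$. Define $g_{\mathscr{A}}:[0,1]\to[0,1]$ by $g_{\mathscr{A}}(s)=\mathbb{P}(W^{(s)}\notin\overline{\mathscr{A}})$ and $\tau(\mathscr{A})=\mathbb{P}(T\text{ has an }\mathscr{A}\text{-subtree})$. Then $1-\tau(\mathscr{A})$ is the smallest fixed point of $g_{\mathscr{A}}$ in $[0,1]$.
   Context: Trees with alphabet $\mathbb{A}$ are prefix-closed subsets of $\mathbb{A}^*$ containing the empty word; for $a\in T$, $W_T(a)=\{i\in\mathbb{A}: ai\in T\}$. The Galton–Watson tree with offspring distribution $W$ (a random subset of $\mathbb{A}$ with $\mathbb{P}(i\in W)>0$ for all $i$) is $T_0=\{\emptyset\}$, $T_n=\{aj:a\in T_{n-1},j\in W_a\}$, $(W_a)$ independent copies of $W$. An $\mathscr{A}$-subtree of $T$ is a tree $S\subseteq T$ with $W_S(a)\in\mathscr{A}$ for all $a\in S$. $\overline{\mathscr{A}}=\{S\subseteq\mathbb{A}:\exists X\in\mathscr{A},\ X\subseteq S\}$. For a random subset $X$ of a finite set $A$ and $s\in[0,1]$, $X^{(s)}=X\cap Y$ where $Y$ is independent of $X$ and $Y\sim\mathrm{Bin}(A,1-s)$, i.e. $\mathbb{P}(Y=B)=(1-s)^{|B|}s^{|A\setminus B|}$ for $B\subseteq A$. *)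

(* Defs.v *)
From HB Require Import structures.
From mathcomp Require Import all_boot all_order all_algebra.
From mathcomp Require Import all_classical all_reals all_analysis.
Set Implicit Arguments. Unset Strict Implicit. Unset Printing Implicit Defensive.
Import Order.TTheory GRing.Theory Num.Theory.
Local Open Scope classical_set_scope.
Local Open Scope ring_scope.

Section GW.
Variables (A : finType) (R : realType).

Definition Abar (Acal : {set {set A}}) (S : {set A}) : bool :=
  [exists X in Acal, X \subset S].

(* Law of X^{(s)} = X \cap Y, where X has law p (p B = P(X = B)) and
   Y ~ Bin(A, 1 - s) is independent of X:
   P(X^{(s)} = C) = sum_{B,Y} [C = B \cap Y] p(B) (1-s)^{|Y|} s^{|A \ Y|}. *)
Definition thin_law (p : {set A} -> R) (s : R) (C : {set A}) : R :=
  \sum_(B : {set A}) \sum_(Y : {set A})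
     (if C == B :&: Y then p B * (1 - s) ^+ #|Y| * s ^+ #|~: Y| else 0).

Definition gA (Acal : {set {set A}}) (p : {set A} -> R) (s : R) : R :=
  \sum_(C : {set A} | ~~ Abar Acal C) thin_law p s C.

(* The Galton-Watson tree built from the offspring sets (W_a)_a:
   w = w_0 ... w_{n-1} is in T iff w_k \in W_{w_0...w_{k-1}} for all k < n. *)
Definition GW_tree (W : seq A -> {set A}) : set (seq A) :=
  [set w | forall k : 'I_(size w), tnth (in_tuple w) k \in W (take k w)].

(* S is an Acal-subtree of T: a tree (contains the empty word, prefix-closed)
   contained in T with W_S(a) \in Acal for every a \in S.
   The word "a i" is rcons a i. *)
Definition is_subtree (Acal : {set {set A}}) (T S : set (seq A)) : Prop :=
  [/\ S [::],
      (forall a i, S (rcons a i) -> S a),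
      S `<=` T &
      (forall a, S a -> finset (fun i : A => `[< S (rcons a i) >]) \in Acal)].

End GW.

(* Main.v *)
Require Import Defs.
From HB Require Import structures.
From mathcomp Require Import all_boot all_order all_algebra.
From mathcomp Require Import all_classical all_reals all_analysis.
From mathcomp Require Import zify.
Import Order.TTheory GRing.Theory Num.Theory.
Import numFieldNormedType.Exports.
Local Open Scope classical_set_scope.
Local Open Scope ring_scope.
Section Comb.
Variables (A : finType) (R : realType).

Definition upd (F : seq A -> {set A}) (a : seq A) (B : {set A}) :=
  fun x => if x == a then B else F x.

Definition dep {T : Type} (D : pred (seq A)) (h : (seq A -> {set A}) -> T) :=
  forall F F', (forall x, D x -> F x = F' x) -> h F = h F'.

Lemma dep_sub {T : Type} (D D' : pred (seq A)) (h : (seq A -> {set A}) -> T) :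
  (forall x, D x -> D' x) -> dep D h -> dep D' h.
Proof. by move=> DD dh F F' hF; apply: dh => x /DD; apply: hF. Qed.

Lemma dep_all {T : Type} (h : (seq A -> {set A}) -> T) : dep predT h.
Proof. by move=> F F' hF; congr h; apply: funext => x; apply: hF. Qed.

Variable w : seq A -> {set A} -> R.

Fixpoint E (s : seq (seq A)) (h : (seq A -> {set A}) -> R) F : R :=
  match s with
  | [::] => h F
  | a :: s' => \sum_B w a B * E s' h (upd F a B)
  end.

Lemma E_ext s h h' F : (forall F, h F = h' F) -> E s h F = E s h' F.
Proof.
elim: s F => [|a s IH] F hh /=; first exact: hh.
by apply: eq_bigr => B _; rewrite IH.
Qed.

Lemma E_dep s D h : dep D h -> dep (fun x => D x && (x \notin s)) (E s h).
Proof.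
elim: s D h => [|a s IH] D h dh F F' hF /=.
  by apply: dh => x Dx; apply: hF; rewrite Dx.
apply: eq_bigr => B _; congr (_ * _).
apply: (IH D h dh) => x /andP[Dx xs]; rewrite /upd; case: eqP => // /eqP xa.
by apply: hF; rewrite Dx in_cons negb_or xa xs.
Qed.

Lemma E_pull s D h1 h2 F : dep D h1 -> (forall x, x \in s -> ~~ D x) ->
  E s (fun F => h1 F * h2 F) F = h1 F * E s h2 F.
Proof.
move=> dh; elim: s F => [|a s IH] F sD //=.
rewrite mulr_sumr; apply: eq_bigr => B _.
rewrite IH; last by move=> x xs; apply: sD; rewrite in_cons xs orbT.
rewrite mulrCA; congr (_ * (_ * _)); apply: dh => x Dx; rewrite /upd.
case: eqP => // xa; move: (sD a); rewrite in_cons eqxx /= => /(_ isT).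
by rewrite -xa => /negP /(_ Dx).
Qed.

Lemma E_cat s s' h F : E (s ++ s') h F = E s (E s' h) F.
Proof.
elim: s F => [|a s IH] F //=.
by apply: eq_bigr => B _; rewrite IH.
Qed.

Lemma E_add s h1 h2 F : E s (fun F => h1 F + h2 F) F = E s h1 F + E s h2 F.
Proof.
elim: s F => [|a s IH] F //=.
rewrite -big_split /=; apply: eq_bigr => B _; by rewrite IH mulrDr.
Qed.

Lemma E_lin s c h F : E s (fun F => c * h F) F = c * E s h F.
Proof. by apply: (@E_pull s pred0) => // ? ? ?. Qed.

Lemma E_sum (I : finType) s (h : I -> (seq A -> {set A}) -> R) F :
  E s (fun F => \sum_i h i F) F = \sum_i E s (h i) F.
Proof.
elim: s F => [|a s IH] F //=.
rewrite exchange_big /=; apply: eq_bigr => B _; by rewrite IH mulr_sumr.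
Qed.

Hypothesis wsum : forall a, \sum_B w a B = 1.
Hypothesis wge0 : forall a B, 0 <= w a B.

Lemma E_const s c F : E s (fun _ => c) F = c.
Proof.
elim: s F => [|a s IH] F //=.
under eq_bigr do rewrite IH; by rewrite -mulr_suml wsum mul1r.
Qed.

Lemma E_one_sub s h F : E s (fun F => 1 - h F) F = 1 - E s h F.
Proof.
rewrite E_add E_const; congr (_ + _).
rewrite (@E_ext _ _ (fun F => (-1) * h F)) ?E_lin ?mulN1r // => ?.
by rewrite mulN1r.
Qed.

Lemma E_mono s h h' F : (forall F, h F <= h' F) -> E s h F <= E s h' F.
Proof.
elim: s F => [|a s IH] F hh /=; first exact: hh.
by apply: ler_sum => B _; apply: ler_wpM2l => //; apply: IH.
Qed.

Lemma E_nodep s D h F : dep D h -> (forall x, x \in s -> ~~ D x) -> E s h F = h F.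
Proof.
move=> dh sD.
rewrite (@E_ext _ _ (fun F => h F * 1)); last by move=> ?; rewrite mulr1.
by rewrite (@E_pull s D h (fun _ => 1) F dh sD) E_const mulr1.
Qed.

Lemma E_filter s D h F : dep D h -> E s h F = E (seq.filter D s) h F.
Proof.
move=> dh; elim: s F => [|a s IH] F //=.
case: ifP => Da /=.
  by apply: eq_bigr => B _; rewrite IH.
have e : forall B, E s h (upd F a B) = E s h F.
  move=> B; apply: (@E_dep _ _ _ dh) => x /andP[Dx _]; rewrite /upd.
  by case: eqP => // xa; rewrite -xa Dx in Da.
under eq_bigr do rewrite e; by rewrite -mulr_suml wsum mul1r IH.
Qed.

Lemma E_undup s h F : E s h F = E (undup s) h F.
Proof.
elim: s F => [|a s IH] F //=.
case: ifP => as_ /=.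
  have e : forall B, E s h (upd F a B) = E s h F.
    move=> B; apply: (@E_dep _ _ _ (dep_all h)) => x /= xs; rewrite /upd.
    by case: eqP => // xa; rewrite xa as_ in xs.
  under eq_bigr do rewrite e; by rewrite -mulr_suml wsum mul1r IH.
by apply: eq_bigr => B _; rewrite IH.
Qed.

Lemma E_prod (idx : seq A) (L : A -> seq (seq A))
    (h : A -> (seq A -> {set A}) -> R) F :
  uniq idx -> (forall i, dep (fun x => x \in L i) (h i)) ->
  (forall i j x, i != j -> x \in L i -> x \notin L j) ->
  E (flatten (map L idx)) (fun F => \prod_(i <- idx) h i F) F
  = \prod_(i <- idx) E (L i) (h i) F.
Proof.
move=> + dh disj; elim: idx F => [|i idx IH] F /=.
  by rewrite !big_nil.
case/andP => iidx uidx; rewrite E_cat big_cons.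
have cst : forall F', \prod_(j <- idx) E (L j) (h j) F' =
                     \prod_(j <- idx) E (L j) (h j) F.
  move=> F'; apply: eq_bigr => j _; apply: (@E_dep _ _ _ (dh j)) => x.
  by rewrite andbN.
rewrite (@E_ext _ _ (fun F' => (\prod_(j <- idx) E (L j) (h j) F) * h i F')).
  by rewrite E_lin mulrC.
move=> F'; rewrite (@E_ext _ _ (fun F => h i F * \prod_(j <- idx) h j F)).
  2: by move=> ?; rewrite big_cons.
rewrite (@E_pull _ _ _ _ _ (dh i)); last first.
  move=> x /flattenP[l /mapP[j jidx ->] xj].
  by apply: (disj j) => //; apply: contraNneq iidx => <-.
by rewrite IH // cst mulrC.
Qed.

End Comb.
Arguments E {A R}.
Arguments upd {A}.
Arguments dep {A T}.

Section Tree.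
Variables (A : finType) (R : realType) (Acal : {set {set A}}) (p : {set A} -> R).

Lemma gA_alt u : gA Acal p u =
  \sum_B \sum_(Y : {set A}) p B * (1 - u) ^+ #|Y| * u ^+ #|~: Y|
       * (~~ Abar Acal (B :&: Y))%:R.
Proof.
rewrite /gA /thin_law.
transitivity (\sum_(C : {set A}) \sum_(B : {set A}) \sum_(Y : {set A})
   (~~ Abar Acal C)%:R * (if C == B :&: Y then p B * (1 - u) ^+ #|Y| * u ^+ #|~: Y| else 0)).
  rewrite big_mkcond; apply: eq_bigr => C _.
  case: (~~ Abar Acal C).
    by apply: eq_bigr => B _; apply: eq_bigr => Y _; rewrite mul1r.
  by rewrite big1 // => B _; rewrite big1 // => Y _; rewrite mul0r.
rewrite exchange_big; apply: eq_bigr => B _.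
rewrite exchange_big; apply: eq_bigr => Y _.
rewrite (bigD1 (B :&: Y)) //= eqxx big1 ?addr0; first by rewrite mulrC.
by move=> C /negbTE ->; rewrite mulr0.
Qed.

Fixpoint Dle (m : nat) (a : seq A) : seq (seq A) :=
  if m is m'.+1 then a :: flatten [seq Dle m' (rcons a i) | i <- index_enum A]
  else [:: a].

Lemma Dle_pre m a x : x \in Dle m a -> exists2 b, x = a ++ b & (size b <= m)%N.
Proof.
elim: m a => [|m IH] a /=.
  by rewrite inE => /eqP ->; exists [::]; rewrite ?cats0.
rewrite in_cons => /orP[/eqP ->|]; first by exists [::]; rewrite ?cats0.
move=> /flattenP[l /mapP[i _ ->] /IH[b -> sb]].
by exists (i :: b); rewrite ?cat_rcons.
Qed.

Lemma Dle_disj m a i j x : i != j -> x \in Dle m (rcons a i) -> x \notin Dle m (rcons a j).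
Proof.
move=> ij /Dle_pre[b -> _]; apply/negP => /Dle_pre[b' e _].
move: e; rewrite !cat_rcons => /eqP; rewrite eqseq_cat // eqseq_cons.
by case/andP => _ /andP[/eqP e _]; rewrite e eqxx in ij.
Qed.

Lemma Dle_notin m a i : a \notin Dle m (rcons a i).
Proof.
apply/negP => /Dle_pre[b /(congr1 size)]; rewrite size_cat size_rcons => e _.
lia.
Qed.

Lemma Dle_notin_flat m a : a \notin flatten [seq Dle m (rcons a i) | i <- index_enum A].
Proof.
apply/negP => /flattenP[l /mapP[i _ ->]]; apply/negP; exact: Dle_notin.
Qed.

Lemma Dle_sub m a i x : x \in Dle m (rcons a i) -> x \in Dle m.+1 a.
Proof.
move=> xD; rewrite /= in_cons; apply/orP; right; apply/flattenP.
by exists (Dle m (rcons a i)) => //; apply/map_f; rewrite mem_index_enum.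
Qed.

Fixpoint hasB (bt : {set A} -> bool) (F : seq A -> {set A}) (a : seq A) (m : nat) : bool :=
  if m is m'.+1 then Abar Acal [set i | (i \in F a) && hasB bt F (rcons a i) m']
  else bt (F a).

Definition btT := fun _ : {set A} => true.

Lemma hasB_dep bt m a : dep (fun x => x \in Dle m a) (fun F => hasB bt F a m).
Proof.
elim: m a => [|m IH] a F F' hF /=.
  by rewrite hF // inE.
have -> : F a = F' a by apply: hF; rewrite mem_head.
congr (Abar Acal _); apply/setP => i; rewrite !inE; congr (_ && _).
by apply: IH => x xD; apply: hF; apply: Dle_sub xD.
Qed.

Lemma hasT_dep m a : dep (fun x => (size x < size a + m)%N) (fun F => hasB btT F a m).
Proof.
elim: m a => [|m IH] a F F' hF //=.
have -> : F a = F' a by apply: hF; rewrite addnS ltnS leq_addr.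
congr (Abar Acal _); apply/setP => i; rewrite !inE; congr (_ && _).
by apply: IH => x; rewrite size_rcons addSnnS => /hF.
Qed.

Lemma Abar_mono (S S' : {set A}) : Abar Acal S -> S \subset S' -> Abar Acal S'.
Proof.
case/existsP => X /andP[XA XS] SS'; apply/existsP; exists X.
by rewrite XA (fintype.subset_trans XS SS').
Qed.

Lemma hasB_T bt F a m : hasB bt F a m -> hasB btT F a m.
Proof.
elim: m a => [|m IH] a //= h; apply: (Abar_mono _ _ h).
by apply/fintype.subsetP => i; rewrite !inE => /andP[-> /IH].
Qed.

Lemma prod_eq_ind (f : A -> bool) (C : {set A}) :
  \prod_(i : A) ((f i) == (i \in C))%:R = ([set i | f i]%SET == C)%:R :> R.
Proof.
case: (boolP [forall i, (f i) == (i \in C)]) => [/forallP h|/forallPn [i hi]].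
  have -> : [set i | f i]%SET = C by apply/setP => i; rewrite inE; apply/eqP/h.
  by rewrite eqxx big1 // => i _; rewrite h.
rewrite (bigD1 i) //= (negbTE hi) mul0r.
suff -> : ([set i | f i]%SET == C) = false by [].
by apply/negbTE; apply: contra hi => /eqP <-; rewrite inE eqxx.
Qed.

Lemma prod_if (C : {set A}) (a1 a2 : R) :
  \prod_(i : A) (if i \in C then a1 else a2) = a1 ^+ #|C| * a2 ^+ #|~: C|.
Proof.
rewrite (bigID (fun i => i \in C)) /=; congr (_ * _).
  rewrite (eq_bigr (fun _ => a1)) ?prodr_const //.
  by move=> i ->.
rewrite (eq_bigr (fun _ => a2)); last by move=> i /negbTE ->.
rewrite -prodr_const; apply: eq_bigl => i; by rewrite inE.
Qed.

End Tree.
Arguments Dle {A}.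
Arguments hasB {A}.
Arguments btT {A}.

Section Rec.
Variables (A : finType) (R : realType) (Acal : {set {set A}}) (p wbd : {set A} -> R) (N : nat).
Hypotheses (psum : \sum_B p B = 1) (wbdsum : \sum_B wbd B = 1).

Definition wN := fun x : seq A => if (size x < N)%N then p else wbd.

Lemma wN_sum a : \sum_B wN a B = 1.
Proof. by rewrite /wN; case: ifP. Qed.

Lemma dep_eqb (D : pred (seq A)) (g : (seq A -> {set A}) -> bool) (c : bool) :
  dep D g -> dep D (fun F => ((g F) == c)%:R : R).
Proof. by move=> dg F1 F2 h; rewrite (dg F1 F2 h). Qed.

Lemma dep_negb (D : pred (seq A)) (g : (seq A -> {set A}) -> bool) :
  dep D g -> dep D (fun F => (~~ g F)%:R : R).
Proof. by move=> dg F1 F2 h; rewrite (dg F1 F2 h). Qed.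

Lemma rec bt m a F : (size a + m)%N = N ->
  E wN (Dle m a) (fun F => (~~ hasB Acal bt F a m)%:R) F
  = iter m (gA Acal p) (\sum_B wbd B * (~~ bt B)%:R).
Proof.
elim: m a F => [|m IH] a F hN.
  rewrite addn0 in hN; rewrite /= /wN hN ltnn.
  by apply: eq_bigr => B _; rewrite /upd eqxx.
have ha : (size a < N)%N by lia.
rewrite iterS; set u := iter m _ _.
have key : forall F', E wN (flatten [seq Dle m (rcons a i) | i <- index_enum A])
     (fun F => (~~ hasB Acal bt F a m.+1)%:R) F'
   = \sum_(C : {set A}) (~~ Abar Acal (F' a :&: C))%:R * ((1 - u) ^+ #|C| * u ^+ #|~: C|).
  move=> F'.
  rewrite (@E_ext _ _ wN _ _ (fun F => \sum_(C : {set A}) (~~ Abar Acal (F a :&: C))%:R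
       * \prod_(i : A) ((hasB Acal bt F (rcons a i) m) == (i \in C))%:R)); last first.
    move=> F0 /=.
    under eq_bigr do rewrite prod_eq_ind.
    rewrite (bigD1 [set i | hasB Acal bt F0 (rcons a i) m]%SET) //= eqxx mulr1.
    rewrite big1 ?addr0; last by move=> C /negbTE; rewrite eq_sym => ->; rewrite mulr0.
    by congr ((~~ Abar Acal _)%:R); apply/setP => i; rewrite !inE.
  rewrite E_sum; apply: eq_bigr => C _.
  rewrite (@E_pull _ _ wN _ (pred1 a) (fun F => (~~ Abar Acal (F a :&: C))%:R)); first last.
  - move=> x xL; apply/negP => /eqP xa; move: xL; rewrite xa.
    by apply/negP; apply: Dle_notin_flat.
  - by move=> F1 F2 h; rewrite h //= eqxx.
  congr (_ * _).
  rewrite (@E_prod A R wN (index_enum A) (fun i => Dle m (rcons a i))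
     (fun i F => ((hasB Acal bt F (rcons a i) m) == (i \in C))%:R) F'); first last.
  - by move=> i j x ij; apply: Dle_disj.
  - by move=> i; apply: dep_eqb; apply: hasB_dep.
  - exact: index_enum_uniq.
  rewrite -prod_if; apply: eq_bigr => i _.
  have hs : (size (rcons a i) + m)%N = N by rewrite size_rcons; lia.
  case: (boolP (i \in C)) => iC.
    rewrite (@E_ext _ _ wN _ _ (fun F => 1 - (~~ hasB Acal bt F (rcons a i) m)%:R)); last first.
      by move=> F0; case: hasB; rewrite /= ?subr0 ?subrr.
    by rewrite (@E_one_sub _ _ _ wN_sum) IH.
  rewrite (@E_ext _ _ wN _ _ (fun F => (~~ hasB Acal bt F (rcons a i) m)%:R)); last first.
    by move=> F0; case: hasB.
  by rewrite IH.
rewrite gA_alt /= {1}/wN ha.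
apply: eq_bigr => B _; rewrite key /upd eqxx mulr_sumr; apply: eq_bigr => Y _.
by rewrite [_%:R * _]mulrC !mulrA.
Qed.

End Rec.
Section Prob.
Variables (A : finType) (R : realType) (d : measure_display)
  (Omega : measurableType d) (P : probability Omega R)
  (W : seq A -> Omega -> {set A}) (p : {set A} -> R).
Hypothesis hmeas : forall (a : seq A) (B : {set A}),
      measurable [set w : Omega | W a w = B].
Hypothesis hindep : forall (s : seq (seq A)) (f : seq A -> {set A}), uniq s ->
      P (\bigcap_(a in [set` s]) [set w : Omega | W a w = f a])
      = (\prod_(a <- s) (p (f a))%:E)%E.

Definition cyl (r : seq (seq A)) (G : seq A -> {set A}) : set Omega :=
  \bigcap_(a in [set` r]) [set w | W a w = G a].

Lemma cyl_nil G : cyl [::] G = setT.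
Proof. by rewrite /cyl set_nil bigcap_set0. Qed.

Lemma cyl_cons a r G : cyl (a :: r) G = [set w | W a w = G a] `&` cyl r G.
Proof.
apply/seteqP; split => x /=.
  move=> h; split; first by apply: h; rewrite /= mem_head.
  by move=> y yr; apply: h; rewrite /= in_cons yr orbT.
move=> [h1 h2] y; rewrite /= in_cons => /orP[/eqP -> //| yr]; exact: h2.
Qed.

Lemma cyl_ext r G G' : (forall x, x \in r -> G x = G' x) -> cyl r G = cyl r G'.
Proof.
move=> h; apply/seteqP; split => x /= hx y yr.
  by rewrite -h //; apply: hx.
by rewrite h //; apply: hx.
Qed.

Lemma cyl_upd r G a B : a \notin r -> cyl r (upd G a B) = cyl r G.
Proof.
move=> ar; apply: cyl_ext => x xr; rewrite /upd; case: eqP => // xa.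
by rewrite -xa xr in ar.
Qed.

Lemma cyl_meas r G : measurable (cyl r G).
Proof.
elim: r => [|a r IH]; first by rewrite cyl_nil.
by rewrite cyl_cons; apply: measurableI.
Qed.

Lemma cyl_P r G : uniq r -> P (cyl r G) = (\prod_(a <- r) p (G a))%:E.
Proof. by move=> ur; rewrite /cyl hindep // prodEFin. Qed.

Lemma fsum_finT (T : finType) (f : T -> \bar R) :
  (\sum_(i \in [set: T]) f i = \sum_(i : T) f i)%E.
Proof.
rewrite (fsbigE (index_enum T)) //.
- by apply: eq_bigl => i; rewrite in_setT.
- exact: index_enum_uniq.
- by move=> i _; rewrite mem_index_enum.
Qed.

Lemma Plem s : uniq s -> forall r G (Q : (seq A -> {set A}) -> bool),
  uniq r -> (forall x, x \in s -> x \notin r) ->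
  dep (fun x => (x \in s) || (x \in r)) Q ->
  measurable ([set w | Q (fun x => W x w)] `&` cyl r G) /\
  P ([set w | Q (fun x => W x w)] `&` cyl r G)
  = (E (fun _ => p) s (fun F => (Q F)%:R * \prod_(a <- r) p (F a)) G)%:E.
Proof.
elim: s => [|a s IH] us r G Q ur sr dQ.
  have hQ : forall w, cyl r G w -> Q (fun x => W x w) = Q G.
    by move=> w cw; apply: dQ => x /= xr; apply: cw.
  case: (boolP (Q G)) => qG.
    have e : [set w | Q (fun x => W x w)] `&` cyl r G = cyl r G.
      apply/seteqP; split => w; first by case.
      by move=> cw; split => //; rewrite /= hQ.
    rewrite e; split; first exact: cyl_meas.
    by rewrite cyl_P //= qG mul1r.
  have e : [set w | Q (fun x => W x w)] `&` cyl r G = set0.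
    apply/seteqP; split => w // [qw cw].
    by move: qw; rewrite /= hQ // (negbTE qG).
  rewrite e; split; first exact: measurable0.
  by rewrite measure0 /= (negbTE qG) mul0r.
move: us; rewrite /= => /andP[as_ us].
have ar : a \notin r by apply: sr; rewrite mem_head.
have IH' : forall B,
  measurable ([set w | Q (fun x => W x w)] `&` cyl (a :: r) (upd G a B)) /\
  P ([set w | Q (fun x => W x w)] `&` cyl (a :: r) (upd G a B))
  = (E (fun _ => p) s (fun F => (Q F)%:R * \prod_(x <- a :: r) p (F x)) (upd G a B))%:E.
  move=> B; apply: IH => //.
  - by rewrite /= ar ur.
  - move=> x xs; rewrite in_cons negb_or sr ?andbT; last by rewrite in_cons xs orbT.
    by apply: contraNneq as_ => <-.
  - apply: dep_sub dQ => x; rewrite !in_cons.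
    by case: (x == a); case: (x \in s); case: (x \in r).
have e : [set w | Q (fun x => W x w)] `&` cyl r G =
   \bigcup_(B in [set: {set A}]) ([set w | Q (fun x => W x w)] `&` cyl (a :: r) (upd G a B)).
  apply/seteqP; split => w.
    move=> [qw cw]; exists (W a w) => //; split => //.
    by rewrite cyl_cons cyl_upd //; split => //=; rewrite /upd eqxx.
  by move=> [B _ [qw]]; rewrite cyl_cons cyl_upd // => -[_ cw].
have triv : trivIset [set: {set A}]
   (fun B => [set w | Q (fun x => W x w)] `&` cyl (a :: r) (upd G a B)).
  move=> B1 B2 _ _ [w [[_ c1] [_ c2]]].
  move: c1 c2; rewrite !cyl_cons /= /upd eqxx => -[<- _] [<- _] //.
split.
  rewrite e; apply: fin_bigcup_measurable; first exact: finite_finset.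
  by move=> B _; case: (IH' B).
rewrite e measure_fin_bigcup //; first last.
- by move=> B _; case: (IH' B).
- exact: finite_finset.
rewrite fsum_finT.
rewrite (eq_bigr (fun B => (E (fun _ => p) s (fun F => (Q F)%:R * \prod_(x <- a :: r) p (F x)) (upd G a B))%:E)); last first.
  by move=> B _; exact: (proj2 (IH' B)).
rewrite sumEFin /=; congr EFin; apply: eq_bigr => B _.
rewrite (@E_ext _ _ _ _ _ (fun F => p (F a) * ((Q F)%:R * \prod_(x <- r) p (F x)))); last first.
  by move=> F; rewrite big_cons mulrCA.
rewrite (@E_pull _ _ _ _ (pred1 a)); first by rewrite /upd eqxx.
  by move=> F1 F2 h; rewrite h //= eqxx.
by move=> x xs; apply/eqP => xa; rewrite -xa xs in as_.
Qed.

Lemma psum : \sum_B p B = 1.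
Proof.
have [] := @Plem [:: [::]] isT [::] (fun _ => finset.set0) (fun _ => true) isT.
- by move=> x; rewrite inE.
- by move=> F F' _.
rewrite cyl_nil setIT => _.
have -> : [set _ : Omega | true] = setT by apply/seteqP; split.
rewrite probability_setT /= => -[] ->; apply: eq_bigr => B _; by rewrite big_nil !mulr1.
Qed.

Lemma Pev s (Q : (seq A -> {set A}) -> bool) G :
  dep (fun x => x \in s) Q ->
  measurable [set w | Q (fun x => W x w)] /\
  P [set w | Q (fun x => W x w)] = (E (fun _ => p) s (fun F => (Q F)%:R) G)%:E.
Proof.
move=> dQ.
have [] := @Plem (undup s) (undup_uniq s) [::] G Q isT.
- by [].
- by apply: dep_sub dQ => x; rewrite mem_undup orbF.
rewrite cyl_nil setIT => m e; split => //; rewrite e; congr EFin.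
rewrite -(@E_undup _ _ _ (fun _ => psum)).
by apply: E_ext => F; rewrite big_nil mulr1.
Qed.

End Prob.
Arguments Abar_mono {A Acal S S'}.

Section Sub.
Variables (A : finType) (Acal : {set {set A}}) (Wf : seq A -> {set A}).

Definition pathP (X : seq A -> {set A}) (w : seq A) :=
  forall k : 'I_(size w), tnth (in_tuple w) k \in X (take k w).

Lemma GW_pathP w : GW_tree Wf w <-> pathP Wf w.
Proof. by []. Qed.

Lemma pathP_nil X : pathP X [::].
Proof. by case. Qed.

Lemma take_rcons_le (a : seq A) i n : (n <= size a)%N -> take n (rcons a i) = take n a.
Proof. by move=> h; rewrite -cats1 takel_cat. Qed.

Lemma take_rcons_size (a : seq A) i : take (size a) (rcons a i) = a.
Proof. by rewrite -cats1 take_size_cat. Qed.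

Lemma pathP_rcons X a i : pathP X (rcons a i) <-> pathP X a /\ i \in X a.
Proof.
split.
- move=> H; split.
    move=> k; have hk : (k < size (rcons a i))%N by rewrite size_rcons ltnS ltnW.
    have := H (Ordinal hk); rewrite !(tnth_nth i) /= nth_rcons ltn_ord.
    by rewrite take_rcons_le // ltnW.
  have hk : (size a < size (rcons a i))%N by rewrite size_rcons.
  have := H (Ordinal hk); rewrite (tnth_nth i) /= nth_rcons ltnn eqxx.
  by rewrite take_rcons_size.
- move=> [H hi] k; rewrite (tnth_nth i) /=.
  have : (nat_of_ord k < (size a).+1)%N by rewrite -(size_rcons a i); exact: ltn_ord.
  rewrite ltnS leq_eqVlt => /orP[/eqP ek| lk].
    by rewrite ek nth_rcons ltnn eqxx take_rcons_size.
  have := H (Ordinal lk); rewrite (tnth_nth i) /= nth_rcons lk take_rcons_le //.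
  exact: ltnW.
Qed.

Lemma sub_has S : is_subtree Acal (GW_tree Wf) S -> forall m, hasB Acal btT Wf [::] m.
Proof.
case=> S0 Spre ST SA m.
suff : forall a, S a -> hasB Acal btT Wf a m by apply.
elim: m => [|m IH] a Sa //=.
have hX : Abar Acal (finset (fun i => `[< S (rcons a i) >])).
  by apply/existsP; exists (finset (fun i => `[< S (rcons a i) >])); rewrite SA // fintype.subxx.
apply: (Abar_mono hX); apply/fintype.subsetP => i; rewrite !inE => Si.
have := ST _ Si; rewrite GW_pathP => /pathP_rcons [_ ->] /=.
exact: IH.
Qed.

Lemma hasT_mono1 m a : hasB Acal btT Wf a m.+1 -> hasB Acal btT Wf a m.
Proof.
elim: m a => [|m IH] a //= h; apply: (Abar_mono h).
by apply/fintype.subsetP => i; rewrite !inE => /andP[-> /IH].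
Qed.

Lemma hasT_mono m n a : (m <= n)%N -> hasB Acal btT Wf a n -> hasB Acal btT Wf a m.
Proof.
elim: n => [|n IHn]; first by rewrite leqn0 => /eqP ->.
rewrite leq_eqVlt => /orP[/eqP -> //| mn] h.
by apply: IHn => //; apply: hasT_mono1.
Qed.

Definition good a := forall m, hasB Acal btT Wf a m.

Lemma good_step a : good a ->
  Abar Acal [set i | (i \in Wf a) && `[< good (rcons a i) >]]%SET.
Proof.
move=> ga.
have : forall i, exists n, `[< good (rcons a i) >] || ~~ hasB Acal btT Wf (rcons a i) n.
  move=> i; case: (pselect (good (rcons a i))) => g.
    by exists 0%N; apply/orP; left; apply/asboolP.
  move/existsNP: g => [n hn]; exists n; apply/orP; right; apply/negP.
  exact: hn.
case/choice => f hf.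
apply: (Abar_mono (ga (\max_(i : A) f i).+1)).
apply/fintype.subsetP => i; rewrite !inE => /andP[iW hi]; rewrite iW /=.
case/orP: (hf i) => // /negP nh; exfalso; apply: nh.
by apply: hasT_mono hi; exact: leq_bigmax.
Qed.

Definition Gset a := [set i | (i \in Wf a) && `[< good (rcons a i) >]]%SET.

Definition Xch a : {set A} :=
  if [pick X in Acal | X \subset Gset a] is Some X then X else finset.set0.

Lemma X_good a : good a -> Xch a \in Acal /\ Xch a \subset Gset a.
Proof.
move=> /good_step /existsP [X0 /andP [X0A X0G]].
rewrite /Xch; case: pickP => [X /andP [] //|none].
by have := none X0; rewrite X0A X0G.
Qed.

Lemma has_sub : (forall m, hasB Acal btT Wf [::] m) ->
  exists S, is_subtree Acal (GW_tree Wf) S.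
Proof.
move=> g0.
have Sg : forall w, pathP Xch w -> good w.
  elim/last_ind => [|a i IH] //; move/pathP_rcons => [Pa iX].
  have [_ /fintype.subsetP sub] := X_good _ (IH Pa).
  by have := sub i iX; rewrite inE => /andP[_ /asboolP].
exists (fun w => pathP Xch w); split.
- exact: pathP_nil.
- by move=> a i /pathP_rcons [].
- move=> w; elim/last_ind: w => [|a i IH] Pw; first exact: pathP_nil.
  move/pathP_rcons: Pw => [Pa iX]; apply/GW_pathP/pathP_rcons; split; first exact: IH.
  have [_ /fintype.subsetP sub] := X_good _ (Sg _ Pa).
  by have := sub i iX; rewrite inE => /andP[].
- move=> a Pa; have [XA _] := X_good _ (Sg _ Pa).
  suff -> : finset (fun i => `[< pathP Xch (rcons a i) >]) = Xch a by [].
  apply/setP => i; rewrite inE; apply/asboolP/idP => [/pathP_rcons [] //| iX].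
  by apply/pathP_rcons; split.
Qed.

End Sub.
Lemma iter_fix (T : Type) (f : T -> T) x n : f x = x -> iter n f x = x.
Proof. by move=> fx; elim: n => [|n IH] //=; rewrite IH fx. Qed.

Lemma gA_poly (A : finType) (R : realType) (Acal : {set {set A}}) (p : {set A} -> R) :
  exists gp : {poly R}, forall s, gA Acal p s = gp.[s].
Proof.
exists (\sum_(C : {set A} | ~~ Abar Acal C) \sum_(B : {set A}) \sum_(Y : {set A})
   (if C == B :&: Y then (p B)%:P * (1 - 'X) ^+ #|Y| * 'X ^+ #|~: Y| else 0)).
move=> s; rewrite /gA /thin_law horner_sum; apply: eq_bigr => C _.
rewrite horner_sum; apply: eq_bigr => B _.
rewrite horner_sum; apply: eq_bigr => Y _.
by case: ifP => _; rewrite !hornerE.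
Qed.

Theorem theorem2p10 (A : finType) (R : realType) (d : measure_display)
  (Omega : measurableType d) (P : probability Omega R)
  (W : seq A -> Omega -> {set A}) (p : {set A} -> R)
  (Acal : {set {set A}})
  (* each W_a is a random subset of A *)
  (hmeas : forall (a : seq A) (B : {set A}),
      measurable [set w : Omega | W a w = B])
  (* each W_a has law p (the offspring distribution of W) *)
  (hlaw : forall (a : seq A) (B : {set A}),
      P [set w : Omega | W a w = B] = (p B)%:E)
  (* the W_a are mutually independent *)
  (hindep : forall (s : seq (seq A)) (f : seq A -> {set A}), uniq s ->
      P (\bigcap_(a in [set` s]) [set w : Omega | W a w = f a])
      = (\prod_(a <- s) (p (f a))%:E)%E)
  (* P(i \in W) > 0 for all i *)
  (hpos : forall i : A, 0 < \sum_(B : {set A} | i \in B) p B)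
  (* Acal is a nonempty collection of nonempty subsets *)
  (hAne : Acal != finset.set0) (hA0 : finset.set0 \notin Acal) :
  let tau := fine (P [set w : Omega |
                 exists S : set (seq A), is_subtree Acal (GW_tree (W ^~ w)) S]) in
  [/\ 0 <= 1 - tau <= 1,
      gA Acal p (1 - tau) = 1 - tau &
      forall x : R, 0 <= x <= 1 -> gA Acal p x = x -> 1 - tau <= x].
Proof.
move=> tau.
set Sev := [set w : Omega | exists S : set (seq A), is_subtree Acal (GW_tree (W ^~ w)) S].
pose Hn := fun n : nat => [set w : Omega | hasB Acal btT (fun x => W x w) [::] n].
have eS : Sev = \bigcap_n Hn n.
  apply/seteqP; split => w.
    by move=> [S sub] n _; apply: sub_has sub n.
  by move=> h; apply: has_sub => m; apply: (h m).
have ps := @psum _ _ _ _ P W p hmeas hindep.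
have pge0 : forall B, 0 <= p B.
  by move=> B; rewrite -lee_fin -(hlaw [::] B) measure_ge0.
pose G0 := fun _ : seq A => finset.set0 : {set A}.
pose t := fun n => E (fun _ => p) (Dle n [::]) (fun F => (hasB Acal btT F [::] n)%:R) G0.
have hPn : forall n, measurable (Hn n) /\ P (Hn n) = (t n)%:E.
  move=> n; apply: (@Pev _ _ _ _ P W p hmeas hindep (Dle n [::])).
  exact: hasB_dep.
pose q := fun n => iter n (gA Acal p) 0.
have tq : forall n, t n = 1 - q n.
  move=> n; have := @rec A R Acal p p n ps ps btT n [::] G0 erefl.
  have -> : @wN A R p p n = fun _ => p by apply/funext => x; rewrite /wN; case: ifP.
  have -> : \sum_B p B * (~~ btT B)%:R = 0 by rewrite big1 // => B _; rewrite mulr0.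
  rewrite (@E_ext _ _ _ _ _ (fun F => 1 - (hasB Acal btT F [::] n)%:R)); last first.
    by move=> F; case: hasB; rewrite /= ?subrr ?subr0.
  rewrite (@E_one_sub _ _ _ (fun _ => ps)) => h.
  rewrite /q -h opprB addrC subrK //.
have nA : (finset.set0 : {set A}) != [set: A]%SET.
  case/finset.set0Pn: hAne => X XA.
  have : X != finset.set0 by apply: contraNneq hA0 => <-.
  case/finset.set0Pn => i _; apply/negP => /eqP e.
  by have := finset.in_setT i; rewrite -e inE.
have qle : forall x, 0 <= x <= 1 -> gA Acal p x = x -> forall n, q n <= x.
  move=> x /andP[x0 x1] gx n.
  pose wbd := fun B : {set A} => (if B == [set: A]%SET then 1 - x else 0)
     + (if B == finset.set0 then x else 0).
  have wsum : \sum_B wbd B = 1.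
    by rewrite big_split /= -!big_mkcond /= !big_pred1_eq subrK.
  have wge0 : forall a B, 0 <= @wN A R p wbd n a B.
    move=> a B; rewrite /wN; case: ifP => _ //; rewrite /wbd.
    by apply: addr_ge0; case: ifP => _; rewrite ?subr_ge0.
  pose bt := fun B : {set A} => B == [set: A]%SET.
  have y0 : \sum_B wbd B * (~~ btT B)%:R = 0.
    by rewrite big1 // => B _; rewrite mulr0.
  have yx : \sum_B wbd B * (~~ bt B)%:R = x.
    rewrite (bigD1 finset.set0) //= big1 ?addr0.
      by rewrite /wbd /bt eqxx (negbTE nA) /= add0r mulr1.
    move=> B BN0; rewrite /wbd /bt (negbTE BN0) addr0.
    by case: ifP => _; rewrite ?mulr0 ?mul0r.
  have h1 := @rec A R Acal p wbd n ps wsum btT n [::] G0 erefl.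
  rewrite y0 in h1.
  have h2 := @rec A R Acal p wbd n ps wsum bt n [::] G0 erefl.
  rewrite yx iter_fix // in h2.
  rewrite /q -h1 -[X in _ <= X]h2; apply: (@E_mono A R _ wge0) => F.
  have := @hasB_T A Acal bt F [::] n.
  case: (hasB Acal bt F [::] n); case: (hasB Acal btT F [::] n) => //= h;
    rewrite ?ler01 ?lexx //; by have := h isT.
have hmS : measurable Sev.
  by rewrite eS; apply: bigcapT_measurable => n; exact: (hPn n).1.
have Pfin : P Sev = tau%:E.
  rewrite /tau -/Sev fineK // ge0_fin_numE ?measure_ge0 //.
  by rewrite (le_lt_trans (probability_le1 _ hmS)) // ltry.
have tau01 : 0 <= tau <= 1.
  by rewrite -!lee_fin -Pfin measure_ge0 probability_le1.
have cvgPH : (P \o Hn) @ \oo --> P Sev.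
  rewrite eS; apply: nonincreasing_cvg_mu.
  - by rewrite (le_lt_trans (probability_le1 _ (hPn 0%N).1)) // ltry.
  - by move=> n; exact: (hPn n).1.
  - by rewrite -eS.
  - move=> m n mn; apply/subsetPset => w; exact: hasT_mono mn.
have ht : t @ \oo --> (tau : R).
  have : (fun n => (t n)%:E) @ \oo --> tau%:E.
    rewrite -Pfin; have -> : (fun n => (t n)%:E) = P \o Hn.
      by apply/funext => n; rewrite /= (hPn n).2.
    exact: cvgPH.
  by move/fine_cvgP => [_ h]; exact: h.
have hq : q @ \oo --> ((1 - tau : R) : R).
  have -> : q = fun n => 1 - t n by apply/funext => n; rewrite tq opprB addrC subrK.
  apply: cvgB; [exact: cvg_cst | exact: ht].
have [gp hgp] := gA_poly _ _ Acal p.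
have hg : (gA Acal p \o q) @ \oo --> gA Acal p (1 - tau).
  have -> : gA Acal p \o q = (horner gp) \o q by apply/funext => n; rewrite /= hgp.
  rewrite hgp; apply: continuous_cvg => //; exact: continuous_horner.
have hq1 : (gA Acal p \o q) @ \oo --> 1 - tau.
  have -> : gA Acal p \o q = (fun n => q n.+1) by apply/funext => n.
  by rewrite (cvg_shiftS q).
have fixp : gA Acal p (1 - tau) = 1 - tau.
  exact: (cvg_unique (@Rhausdorff R) hg hq1).
split => //.
- case/andP: tau01 => t0 t1; apply/andP; split.
    by rewrite subr_ge0.
  by rewrite lerBlDr lerDl.
- move=> x hx gx.
  have nq : \forall n \near \oo, q n <= x.
    by apply: nearW; exact: qle.
  have := limr_le (cvgP _ hq) nq.
  rewrite (cvg_lim (@Rhausdorff R) hq); apply; exact: _.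
Qed.
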